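(* Let $n\ge 2$. For a prime $p$, let $X_p$ be the set of matrices in $\mathrm{SL}(n,\mathbb{F}_p)$ whose characteristic polynomial has a monic factor over $\mathbb{F}_p$ of degree between $1$ and $n-1$ with constant term $1$. Then $|X_p|/|\mathrm{SL}(n,\mathbb{F}_p)|\to 0$ as $p\to\infty$. *)

(* Defs.v *)
From HB Require Import structures.
From mathcomp Require Import all_boot all_order all_algebra.
From mathcomp Require Import boolp.
Set Implicit Arguments. Unset Strict Implicit. Unset Printing Implicit Defensive.
Import GRing.Theory Num.Theory.
Local Open Scope ring_scope.

Definition SLset (p n : nat) : {set 'M['F_p]_n} := [set A | \det A == 1].

Definition bad_charpoly (p n : nat) (A : 'M['F_p]_n) : Prop :=
  exists q : {poly 'F_p},
    [/\ q \is monic, (1 <= (size q).-1 <= n.-1)%N, q %| char_poly A & q`_0 = 1].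

Definition Xset (p n : nat) : {set 'M['F_p]_n} :=
  [set A in SLset p n | `[< bad_charpoly A >]].

Definition Xratio (p n : nat) : rat := (#|Xset p n|%:R / #|SLset p n|%:R).

(* Main.v *)
Require Import Defs.
From HB Require Import structures.
From mathcomp Require Import all_boot all_order all_algebra.
From mathcomp Require Import boolp.
From mathcomp Require Import all_field zify.
Import Order.TTheory GRing.Theory Num.Theory.
Local Open Scope ring_scope.
Set Implicit Arguments. Unset Strict Implicit. Unset Printing Implicit Defensive.

Lemma char_poly_lblock (R : comNzRingType) m1 m2 (A1 : 'M[R]_m1)
  (A3 : 'M[R]_(m2, m1)) (A4 : 'M[R]_m2) :
  char_poly (block_mx A1 0 A3 A4) = char_poly A1 * char_poly A4.
Proof.
rewrite /char_poly /char_poly_mx map_block_mx /= map_mx0.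
rewrite scalar_mx_block opp_block_mx add_block_mx oppr0 addr0.
by rewrite det_lblock.
Qed.

Lemma char_poly_conj (F : fieldType) n (g A : 'M[F]_n) : g \in unitmx ->
  char_poly (g *m A *m invmx g) = char_poly A.
Proof.
move=> gu; rewrite /char_poly /char_poly_mx.
have -> : 'X%:M - map_mx polyC (g *m A *m invmx g) =
   map_mx polyC g *m ('X%:M - map_mx polyC A) *m map_mx polyC (invmx g).
  rewrite mulmxBr mulmxBl !map_mxM /= mul_mx_scalar -scalemxAl; congr (_ - _).
  by rewrite -map_mxM mulmxV // map_mx1 scalemx1.
rewrite !det_mulmx !det_map_mx det_inv mulrC mulrA -rmorphM /=.
by rewrite mulVf ?mul1r // -unitfE -unitmxE.
Qed.

Section Krylov.
Variable F : fieldType.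

Lemma eig_horner (K : fieldType) (p : {poly K}) n (A : 'M[K]_n.+1) (v : 'rV_n.+1) a :
  v *m A = a *: v -> v *m horner_mx A p = p.[a] *: v.
Proof.
move=> Hv; elim/poly_ind: p => [|p c IH].
  by rewrite rmorph0 mulmx0 horner0 scale0r.
rewrite rmorphD rmorphM /= horner_mx_X horner_mx_C hornerMXaddC.
by rewrite mulmxDr mulmxA IH -scalemxAl Hv scalerA mul_mx_scalar scalerDl.
Qed.

Lemma S1 n (A : 'M[F]_n.+1) f : irreducible_poly f -> f \is monic ->
  f %| char_poly A -> exists2 w : 'rV_n.+1, w != 0 & w *m horner_mx A f = 0.
Proof.
move=> fI fm fd.
have hMI : monic_irreducible_poly f by [].
pose L := {poly %/ f with hMI}.
pose iota : {rmorphism F -> L} := qpolyC f.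
have rootL : root (map_poly iota f) 'qX.
  apply/eqP; rewrite -in_qpoly_comp_horner comp_polyXr.
  apply/val_inj => /=; rewrite mk_monicE //.
  by apply: Pdiv.CommonRing.rmodpp; apply: mulrC.
have : eigenvalue (map_mx iota A) 'qX.
  rewrite eigenvalue_root_char -map_char_poly.
  case/dvdpP: fd => r ->. by rewrite rmorphM /= rootM rootL orbT.
case/eigenvalueP => v Hv vn0.
have H := @eig_horner L (map_poly iota f) _ _ _ _ Hv.
rewrite (rootP rootL) scale0r in H.
have : \det (horner_mx (map_mx iota A) (map_poly iota f)) == 0.
  by apply/det0P; exists v.
rewrite -map_horner_mx det_map_mx fmorph_eq0 => /det0P[w wn0 Hw].
by exists w.
Qed.

Lemma horner_mx_sumn n (A : 'M[F]_n.+1) (p : {poly F}) m : (size p <= m)%N ->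
  horner_mx A p = \sum_(i < m) p`_i *: A ^+ i.
Proof.
move=> sp.
rewrite -{1}[p]coefK poly_def rmorph_sum /=.
rewrite [LHS](big_ord_widen m (fun i => horner_mx A (p`_i *: 'X^i))) // big_mkcond /=.
apply: eq_bigr => i _; case: ifP => [_|/negbT].
  by rewrite horner_mxZ rmorphXn /= horner_mx_X.
by rewrite -leqNgt => H; rewrite nth_default // scale0r.
Qed.

Variables (n : nat) (A : 'M[F]_n.+1) (f : {poly F}).
Hypotheses (fI : irreducible_poly f) (fm : f \is monic).
Variable w : 'rV[F]_n.+1.
Hypotheses (wn0 : w != 0) (wf : w *m horner_mx A f = 0).

Definition krylov : 'M[F]_((size f).-1, n.+1) := \matrix_(i < (size f).-1) (w *m A ^+ i).

Lemma krylov_free : row_free krylov.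
Proof.
apply: inj_row_free => v Hv.
have H1 : w *m horner_mx A (rVpoly v) = 0.
  rewrite (@horner_mx_sumn _ _ _ (size f).-1) ?size_poly //.
  rewrite -Hv [RHS]mulmx_sum_row mulmx_sumr; apply: eq_bigr => i _.
  by rewrite coef_rVpoly_ord rowK scalemxAr.
have [p0|pn0] := eqVneq (rVpoly v) 0.
  by rewrite -[v]rVpolyK p0 linear0.
have cop : coprimep f (rVpoly v).
  rewrite irreducible_poly_coprime //; apply/negP => /(dvdp_leq pn0) H2.
  have sp : (size (rVpoly v) <= (size f).-1)%N by apply: size_poly.
  case: fI => sf _; move: (leq_trans H2 sp) sf; case: (size f) => [|k] //=; by rewrite ltnn.
have : (w <= kermxpoly A f :&: kermxpoly A (rVpoly v))%MS.
  by rewrite sub_capmx /kermxpoly; apply/andP; split; apply/sub_kermxP.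
by rewrite mxdirect_kermxpoly // submx0 (negPf wn0).
Qed.

Lemma krylov_stable : krylov *m A = companionmx f *m krylov.
Proof.
have sf : (1 < size f)%N by case: fI.
apply/row_matrixP => i; rewrite row_mul rowK -mulmxA -[A ^+ i *m A]/(A ^+ i * A) -exprSr.
rewrite row_mul [RHS]mulmx_sum_row.
case: (eqVneq (i : nat) ((size f).-1.-1)) => Hi.
- have Hk : ((size f).-1 = i.+1)%N by rewrite Hi prednK // -ltnS prednK // ltnW.
  have sz : (size f <= ((size f).-1).+1)%N by rewrite prednK // ltnW.
  have := wf; rewrite (@horner_mx_sumn _ _ _ ((size f).-1).+1) //.
  rewrite big_ord_recr /= mulmxDr.
  have -> : f`_(size f).-1 = 1 by move/monicP: fm.
  rewrite scale1r mulmx_sumr => /eqP; rewrite addrC addr_eq0 => /eqP E.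
  rewrite -Hk E -sumrN; apply: eq_bigr => j _.
  rewrite !mxE ifT; last by apply/eqP.
  by rewrite rowK -scalemxAr scaleNr.
- have Hi1 : (i.+1 < (size f).-1)%N.
    rewrite ltn_neqAle ltn_ord andbT; apply: contra Hi => /eqP E; apply/eqP.
    by rewrite -[X in _ = X.-1]E.
  rewrite (bigD1 (Ordinal Hi1)) //= big1 ?addr0.
    by rewrite !mxE (negPf Hi) eqxx scale1r rowK.
  move=> j /negPf Hj; rewrite !mxE (negPf Hi).
  have -> : (i.+1 == j :> nat) = false.
    by apply/negP => /eqP E; move: Hj; rewrite -val_eqE /= E eqxx.
  by rewrite scale0r.
Qed.

End Krylov.

Section L1.
Variable F : fieldType.

Lemma irr_factor (q : {poly F}) : (1 < size q)%N ->
  exists f, [/\ irreducible_poly f, f \is monic & f %| q].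
Proof.
move=> sq; move: {2}(size q) (leqnn (size q)) => m; elim: m q sq => [|m IH] q sq sm.
  by move: (leq_trans sq sm).
case: (pselect (irreducible_poly q)) => [qI|qnI].
  have qn0 : q != 0 by rewrite -size_poly_gt0 ltnW.
  have lc : lead_coef q != 0 by rewrite lead_coef_eq0.
  exists ((lead_coef q)^-1 *: q); split.
  - split; first by rewrite size_scale ?invr_eq0.
    move=> r sr; rewrite dvdpZr ?invr_eq0 // => rq.
    apply: eqp_trans (apply_irredp qI sr rq) _.
    by rewrite eqp_sym eqp_scale ?invr_eq0.
  - by rewrite monicE lead_coefZ mulVf.
  - by rewrite dvdpZl ?invr_eq0.
have [r [sr rq nrq]] : exists r : {poly F}, [/\ size r != 1, r %| q & ~ (r %= q)].
  apply: contrapT => H; apply: qnI; split => // r sr rq.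
  by apply: contrapT => nrq; apply: H; exists r.
have qn0 : q != 0 by rewrite -size_poly_gt0 ltnW.
have rn0 : r != 0 by apply: contraNneq qn0 => r0; move: rq; rewrite r0 dvd0p.
have srq : (size r < size q)%N.
  rewrite ltn_neqAle dvdp_leq // andbT; apply/negP => /eqP E.
  by apply: nrq; rewrite -dvdp_size_eqp // E.
have sr1 : (1 < size r)%N.
  by move: sr; rewrite -size_poly_gt0 in rn0; case: (size r) rn0 => [|[|]].
have [f [fI fm fr]] := IH r sr1 (leq_trans (srq : (size r < size q)%N) sm).
by exists f; split => //; apply: dvdp_trans rq.
Qed.

Lemma complete k e (K : 'M[F]_(k, k + e)) : row_free K ->
  exists W : 'M[F]_(e, k + e), col_mx K W \in unitmx.
Proof.
move=> Kf.
have rk : \rank (K^C)%MS = e by rewrite mxrank_compl (eqP Kf) addKn.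
exists (castmx (rk, erefl) (row_base (K^C)%MS)).
have E : (col_mx K (castmx (rk, erefl) (row_base (K^C)%MS)) :=: K + K^C)%MS.
  apply: eqmx_trans (eqmx_sym (addsmxE _ _)) _.
  apply: adds_eqmx => //.
  exact: eqmx_trans (eqmx_cast _ _) (eq_row_base _).
by rewrite -row_full_unit /row_full E.1; apply: addsmx_compl_full.
Qed.

Lemma block_conj d e (U : 'M[F]_(d, d + e)) (W : 'M_(e, d + e))
  (A : 'M_(d + e)) (B : 'M_d) :
  col_mx U W \in unitmx -> U *m A = B *m U ->
  ulsubmx (col_mx U W *m A *m invmx (col_mx U W)) = B /\
  ursubmx (col_mx U W *m A *m invmx (col_mx U W)) = 0.
Proof.
set g := col_mx U W; set M := g *m A *m invmx g => gu UA.
have MG : M *m g = g *m A by rewrite -mulmxA mulVmx // mulmx1.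
have : usubmx (M *m g) = usubmx (g *m A) by rewrite MG.
rewrite -{1}[M]vsubmxK mul_col_mx col_mxKu /g mul_col_mx col_mxKu.
rewrite -[usubmx M]hsubmxK -/g UA.
have -> : B *m U = row_mx B 0 *m g by rewrite mul_row_col mul0mx addr0.
by move/(can_inj (mulmxK gu))/eq_row_mx.
Qed.

Lemma krylov_ex n (A : 'M[F]_n) f : irreducible_poly f -> f \is monic ->
  f %| char_poly A -> exists K : 'M[F]_((size f).-1, n),
  row_free K /\ K *m A = companionmx f *m K.
Proof.
case: n A => [|n] A fI fm fd.
  move: fd; rewrite /char_poly det_mx00 dvdp1 => /eqP sf.
  by case: fI => H _; rewrite sf in H.
have [w wn0 wf] := S1 fI fm fd.
exists (krylov A f w); split; first exact: krylov_free.
exact: krylov_stable.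
Qed.

Lemma L1 n (A : 'M[F]_n) (q : {poly F}) : q \is monic -> q %| char_poly A ->
  exists d (U : 'M[F]_(d, n)) (B : 'M[F]_d),
    [/\ row_free U, U *m A = B *m U & char_poly B = q].
Proof.
elim/ltn_ind: n A q => n IH A q qm qd.
case: (ltnP 1 (size q)) => [sq|sq]; last first.
  have q1 : q = 1.
    have : size q == 1%N.
      by rewrite eqn_leq sq size_poly_gt0 monic_neq0.
    case/size_poly1P => c _ qc; move/monicP: qm; rewrite qc lead_coefC => ->.
    by [].
  exists 0%N, 0, 0; split.
  - by rewrite /row_free mxrank0.
  - by rewrite [LHS]flatmx0 [RHS]flatmx0.
  - by rewrite q1 /char_poly det_mx00.
have [f [fI fm fq]] := irr_factor sq.
have fd : f %| char_poly A := dvdp_trans fq qd.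
have [K [Kf KA]] := krylov_ex fI fm fd.
have kn : ((size f).-1 <= n)%N by rewrite -(eqP Kf) rank_leq_col.
have [e Ee] : exists e, n = ((size f).-1 + e)%N by exists (n - (size f).-1)%N; rewrite subnKC.
subst n.
have kp : (0 < (size f).-1)%N by case: fI => sf _; rewrite -subn1 subn_gt0.
have [W gu] := complete Kf.
set g := col_mx K W in gu.
set M := g *m A *m invmx g.
have [Mul Mur] := block_conj gu KA.
have Mblk : M = block_mx (companionmx f) 0 (dlsubmx M) (drsubmx M).
  by rewrite -{1}[M]submxK Mul Mur.
have chiA : char_poly A = f * char_poly (drsubmx M).
  by rewrite -(char_poly_conj A gu) -/M {1}Mblk char_poly_lblock companionmxK.
have GA : g *m A = M *m g by rewrite /M -mulmxA mulVmx // mulmx1.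
clearbody M.
have fn0 : f != 0 by apply: monic_neq0.
have qE : q = (q %/ f) * f by rewrite divpK.
have q'm : (q %/ f) \is monic by move: qm; rewrite {1}qE monicMr.
have q'd : (q %/ f) %| char_poly (drsubmx M).
  by rewrite -(dvdp_mul2r _ _ fn0) -qE mulrC -chiA.
have eL : (e < (size f).-1 + e)%N by rewrite -{1}[e]add0n ltn_add2r.
have [d' [U' [B' [U'f U'A chB']]]] := IH e eL _ _ q'm q'd.
exists ((size f).-1 + d')%N, (block_mx 1%:M 0 0 U' *m g),
  (block_mx (companionmx f) 0 (U' *m dlsubmx M) B'); split.
- rewrite /row_free mxrankMfree ?row_free_unit //.
  apply/row_freeP; case/row_freeP: U'f => R' UR'.
  exists (block_mx 1%:M 0 0 R').
  rewrite mulmx_block !mulmx0 !mul0mx !mulmx1 !addr0 !add0r UR'.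
  by rewrite -scalar_mx_block.
- rewrite -mulmxA GA !mulmxA; congr (_ *m _).
  rewrite [in X in X = _]Mblk !mulmx_block !mulmx0 !mul0mx !mulmx1 ?mul1mx !addr0 ?add0r.
  by rewrite U'A.
- by rewrite char_poly_lblock companionmxK // chB' mulrC -qE.
Qed.

End L1.

Section Count.
Variable F : finFieldType.

Definition cnj n (g A : 'M[F]_n) := g *m A *m invmx g.

Lemma cnj_eq n (g A X : 'M[F]_n) : g \in unitmx -> X *m g = g *m A -> X = cnj g A.
Proof. by move=> gu H; rewrite /cnj -H mulmxK. Qed.

Lemma cnj_mul n (g A : 'M[F]_n) : g \in unitmx -> cnj g A *m g = g *m A.
Proof. by move=> gu; rewrite /cnj -mulmxA mulVmx // mulmx1. Qed.

Lemma cnjM n (h g A : 'M[F]_n) : h \in unitmx -> g \in unitmx ->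
  cnj (h *m g) A = cnj h (cnj g A).
Proof.
move=> hu gu; apply/esym/cnj_eq; first by rewrite unitmx_mul hu.
by rewrite mulmxA cnj_mul // -mulmxA cnj_mul // mulmxA.
Qed.

Lemma det_cnj n (g A : 'M[F]_n) : g \in unitmx -> \det (cnj g A) = \det A.
Proof.
move=> gu; rewrite /cnj !det_mulmx det_inv mulrC mulrA mulVf ?mul1r //.
by rewrite -unitfE -unitmxE.
Qed.

Definition dg m (a : F) : 'M[F]_m.+1 := diag_mx (\row_(i < m.+1) (if i == ord0 then a else 1)).

Lemma det_dg m a : \det (dg m a) = a.
Proof.
rewrite det_diag big_ord_recl !mxE eqxx big1 ?mulr1 //.
move=> i _; rewrite !mxE.
have H := neq_lift ord0 i.
rewrite eq_sym (negPf H). reflexivity.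
Qed.

Lemma lowmul m1 m2 (X Y : 'M[F]_(m1 + m2)) : ursubmx X = 0 -> ursubmx Y = 0 ->
  ulsubmx (X *m Y) = ulsubmx X *m ulsubmx Y /\ ursubmx (X *m Y) = 0.
Proof.
move=> X0 Y0; rewrite -[X]submxK -[Y]submxK X0 Y0 mulmx_block.
by rewrite !block_mxKul block_mxKur !mulmx0 !mul0mx ?addr0 ?add0r.
Qed.

Lemma det_low m1 m2 (X : 'M[F]_(m1 + m2)) : ursubmx X = 0 ->
  \det X = \det (ulsubmx X) * \det (drsubmx X).
Proof. by move=> X0; rewrite -{1}[X]submxK X0 det_lblock. Qed.

Variables (d' e' : nat).
Local Notation N := (d'.+1 + e'.+1)%N.

Definition SLs : {set 'M[F]_N} := [set A | \det A == 1].
Definition Tset (c : F) : {set 'M[F]_N} :=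
  [set M | [&& ursubmx M == 0, \det (ulsubmx M) == c & \det M == 1]].
Definition P1 : {set 'M[F]_N} := [set h | (ursubmx h == 0) && (\det h == 1)].

Lemma closeT c (h M : 'M[F]_N) : h \in unitmx -> ursubmx h = 0 ->
  M \in Tset c -> cnj h M \in Tset c.
Proof.
move=> hu h0; rewrite !inE => /and3P[/eqP M0 /eqP Mc /eqP M1].
set X := cnj h M.
have XH : X *m h = h *m M by rewrite cnj_mul.
have dh : \det h != 0 by rewrite -unitfE -unitmxE.
have := dh; rewrite det_low // mulf_eq0 negb_or => /andP[dh1 dh4].
have h4u : drsubmx h \in unitmx by rewrite unitmxE unitfE.
have [ulhM urhM] := lowmul h0 M0.
have urX : ursubmx X = 0.
  have : ursubmx (X *m h) = 0 by rewrite XH.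
  rewrite -{1}[X]submxK -[h]submxK h0 mulmx_block block_mxKur mulmx0 add0r.
  by move/(congr1 (mulmx^~ (invmx (drsubmx h)))); rewrite mul0mx mulmxK.
have [ulXh _] := lowmul urX h0.
rewrite urX eqxx /= det_cnj // M1 eqxx andbT.
have := congr1 (@determinant _ _ \o (@ulsubmx _ _ _ _ _)) XH.
rewrite /= ulXh ulhM !det_mulmx mulrC => /(mulfI dh1) ->.
by rewrite Mc.
Qed.

Definition Dm (a b : F) : 'M[F]_N := block_mx (dg d' a) 0 0 (dg e' b).

Lemma Dm_ur a b : ursubmx (Dm a b) = 0. Proof. by rewrite /Dm block_mxKur. Qed.
Lemma Dm_ul a b : ulsubmx (Dm a b) = dg d' a. Proof. by rewrite /Dm block_mxKul. Qed.
Lemma det_Dm a b : \det (Dm a b) = a * b.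
Proof. by rewrite /Dm det_lblock !det_dg. Qed.

Lemma cardP1 c : c != 0 -> (#|Tset c| * #|F|.-1 <= #|P1|)%N.
Proof.
move=> cn0.
pose phi (x : F * 'M[F]_N) := Dm x.1 x.1^-1 *m x.2.
have -> : #|F|.-1 = #|[set~ (0 : F)]| by rewrite cardsC1.
rewrite mulnC -cardsX -(@card_in_imset _ _ phi).
  apply: subset_leq_card; apply/subsetP => _ /imsetP[[a M] /setXP[an0 MT] ->].
  move: MT an0; rewrite !inE /phi /= => /and3P[/eqP M0 _ /eqP M1] an0.
  have [_ ->] := lowmul (Dm_ur a a^-1) M0.
  rewrite eqxx det_mulmx det_Dm M1 mulr1 (mulfV an0). by apply/eqP.
move=> [a M] [b M'] /setXP[/= an0 MT] /setXP[/= bn0 M'T].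
move: MT M'T an0 bn0; rewrite !inE /phi /=.
move=> /and3P[/eqP M0 /eqP Mc _] /and3P[/eqP M'0 /eqP M'c _] an0 bn0 E.
have eab : a = b.
  have := congr1 (@determinant _ _ \o (@ulsubmx _ _ _ _ _)) E.
  rewrite /= (lowmul (Dm_ur _ _) M0).1 (lowmul (Dm_ur _ _) M'0).1.
  by rewrite !det_mulmx !Dm_ul !det_dg Mc M'c => /(mulIf cn0).
subst b; congr (_, _).
have Du : Dm a a^-1 \in unitmx by rewrite unitmxE det_Dm unitfE (mulfV an0) oner_neq0.
by move: E; apply: (can_inj (mulKmx Du)).
Qed.


Definition Yset n d (c : F) : {set 'M[F]_n} :=
  [set A | (\det A == 1) && `[< exists (U : 'M[F]_(d, n)) (B : 'M[F]_d),
      [/\ row_free U, U *m A = B *m U & \det B = c] >]].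

Lemma claim1 c A : A \in Yset N d'.+1 c -> exists2 g, g \in SLs & cnj g A \in Tset c.
Proof.
rewrite inE => /andP[/eqP A1 /asboolP[U [B [Uf UA Bc]]]].
have [W g0u] := complete Uf.
have [ul ur] := block_conj g0u UA.
set g0 := col_mx U W in g0u ul ur.
have X0T : cnj g0 A \in Tset c.
  rewrite inE; apply/and3P; split; first by rewrite /cnj ur.
    by rewrite /cnj ul Bc.
  by rewrite det_cnj // A1.
have dg0 : \det g0 != 0 by rewrite -unitfE -unitmxE.
pose h := Dm 1 (\det g0)^-1.
have hu : h \in unitmx by rewrite unitmxE det_Dm mul1r unitfE invr_eq0.
exists (h *m g0).
  by rewrite inE det_mulmx det_Dm mul1r mulVf.
by rewrite cnjM //; apply: closeT => //; exact: Dm_ur.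
Qed.

Lemma claim2 c g A h : g \in SLs -> cnj g A \in Tset c -> h \in P1 ->
  (h *m g \in SLs) && (cnj (h *m g) A \in Tset c).
Proof.
move=> gS gT hP.
have g1 : \det g = 1 by move: gS; rewrite inE => /eqP.
have /andP[/eqP h0 /eqP h1] : (ursubmx h == 0) && (\det h == 1) by move: hP; rewrite inE.
have gu : g \in unitmx by rewrite unitmxE g1 unitr1.
have hu : h \in unitmx by rewrite unitmxE h1 unitr1.
apply/andP; split; first by rewrite inE det_mulmx g1 h1 mulr1.
by rewrite cnjM //; apply: closeT.
Qed.

Lemma countY c : c != 0 -> (#|Yset N d'.+1 c| * #|F|.-1 <= #|SLs|)%N.
Proof.
move=> cn0.
have P1pos : (0 < #|P1|)%N.
  apply/card_gt0P; exists 1%:M; rewrite inE det1 eqxx andbT.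
  by rewrite (scalar_mx_block d'.+1 e'.+1) block_mxKur.
pose cnt A := #|[set g | (g \in SLs) && (cnj g A \in Tset c)]|.
pose cnt' g := #|[set A | (A \in SLs) && (cnj g A \in Tset c)]|.
have H1 : forall A, A \in Yset N d'.+1 c -> (#|P1| <= cnt A)%N.
  move=> A /claim1 [g0 g0S g0T].
  have g0u : g0 \in unitmx by move: g0S; rewrite inE unitmxE => /eqP ->; rewrite unitr1.
  rewrite -(card_imset _ (can_inj (mulmxK g0u))).
  apply: subset_leq_card; apply/subsetP => _ /imsetP[h hP ->]; rewrite inE.
  exact: claim2.
have H2 : forall g, g \in SLs -> cnt' g = #|Tset c|.
  move=> g gS.
  have gu : g \in unitmx by move: gS; rewrite inE unitmxE => /eqP ->; rewrite unitr1.
  have inj : injective (cnj g).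
    move=> A B E; apply: (can_inj (mulKmx gu)).
    by rewrite -(@cnj_mul _ g A gu) -(@cnj_mul _ g B gu) E.
  rewrite /cnt' -(@card_preimset _ (cnj g) (Tset c) inj); apply: eq_card => A; rewrite !inE.
  rewrite det_cnj //; case: (\det A == 1); rewrite /= ?andbF //.
have E1 : \sum_(A in SLs) cnt A = \sum_(g in SLs) cnt' g.
  rewrite /cnt /cnt'.
  under eq_bigr do rewrite -sum1dep_card.
  rewrite (exchange_big_dep (fun g => g \in SLs)) /=; last by move=> i j _ /andP[].
  apply: eq_bigr => g gS; rewrite -sum1dep_card; apply: eq_bigl => A.
  by rewrite gS.
have E2 : \sum_(g in SLs) cnt' g = (#|SLs| * #|Tset c|)%N.
  by rewrite (eq_bigr _ H2) sum_nat_const.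
have key : (#|Yset N d'.+1 c| * #|P1| <= #|SLs| * #|Tset c|)%N.
  rewrite -sum_nat_const -E2 -E1.
  apply: (@leq_trans (\sum_(A in Yset N d'.+1 c) cnt A)).
    by apply: leq_sum => A; exact: H1.
  rewrite [X in (_ <= X)%N](bigID (fun A => A \in Yset N d'.+1 c)) /=.
  apply: leq_trans (leq_addr _ _); rewrite leq_eqVlt; apply/orP; left; apply/eqP.
  apply: eq_bigl => A; case: (boolP (A \in Yset N d'.+1 c)); rewrite ?andbT ?andbF //.
  by rewrite inE => /andP[A1 _]; rewrite inE.
have cP := cardP1 cn0.
case: (posnP #|Tset c|) => T0.
  move: key; rewrite T0 muln0 leqn0 muln_eq0 (negPf (lt0n_neq0 P1pos)) orbF.
  by move/eqP ->.
rewrite -(leq_pmul2r T0) mulnAC.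
apply: leq_trans key; rewrite -mulnA leq_mul2l cP orbT //.
Qed.

End Count.

Lemma countY_gen (F : finFieldType) n d (c : F) : (0 < d < n)%N -> c != 0 ->
  (#|Yset n d c| * #|F|.-1 <= #|[set A : 'M[F]_n | \det A == 1%R]|)%N.
Proof.
case/andP => d0 dn cn0.
have [d' Ed] : exists d', d = d'.+1 by exists d.-1; rewrite prednK.
subst d.
have [e' Ee] : exists e', n = (d'.+1 + e'.+1)%N.
  by exists (n - d'.+2)%N; rewrite addnS -addSn subnKC.
subst n.
exact: countY.
Qed.

Lemma card_bigcup_le (T I : finType) (G : I -> {set T}) :
  (#|\bigcup_i G i| <= \sum_i #|G i|)%N.
Proof.
apply: (big_ind2 (fun (S : {set T}) k => #|S| <= k)%N) => //.
  by rewrite cards0.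
move=> S1 k1 S2 k2 H1 H2.
by apply: leq_trans (leq_card_setU S1 S2).1 _; apply: leq_add.
Qed.

Lemma Xcard p n : prime p ->
  (#|Xset p n| * p.-1 <= n.-1 * #|SLset p n|)%N.
Proof.
move=> pp.
pose Yd (d : 'I_n) : {set 'M['F_p]_n} :=
  if (0 < d)%N then Yset n d ((-1) ^+ d) else set0.
have sub : Xset p n \subset \bigcup_d Yd d.
  apply/subsetP => A; rewrite inE => /andP[AS /asboolP[q [qm qs qd q0]]].
  have [d [U [B [Uf UA chB]]]] := L1 qm qd.
  have sq : size q = d.+1 by rewrite -chB size_char_poly.
  rewrite sq /= in qs.
  have dlt : (d < n)%N.
    case/andP: qs => d1 dn; move: dn; case: (n) => [|n'] /= dn; last by rewrite ltnS.
    by move: (leq_trans d1 dn).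
  have d0 : (0 < d)%N by case/andP: qs.
  apply/bigcupP; exists (Ordinal dlt) => //.
  rewrite /Yd /= d0 inE; apply/andP; split.
    by move: AS; rewrite inE.
  apply/asboolP; exists U, B; split => //.
  have := char_poly_det B; rewrite chB q0 => H.
  have : (-1) ^+ d * 1 = (-1) ^+ d * ((-1) ^+ d * \det B :> 'F_p) by congr (_ * _); exact: H.
  by rewrite mulr1 mulrA -expr2 sqrr_sign mul1r => ->.
have cF : #|'F_p| = p by rewrite card_Fp.
apply: (@leq_trans ((\sum_d #|Yd d|) * p.-1)%N).
  by rewrite leq_mul2r (leq_trans (subset_leq_card sub)) ?card_bigcup_le ?orbT.
rewrite big_distrl /=.
apply: (@leq_trans (\sum_(d < n) (if (0 < d)%N then #|SLset p n| else 0%N))).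
  apply: leq_sum => d _; rewrite /Yd; case: ifP => d0; last by rewrite cards0.
  have := @countY_gen 'F_p n d ((-1) ^+ d).
  rewrite d0 ltn_ord signr_eq0 cF => /(_ isT isT) H; exact: H.

case: n {Yd sub} => [|n] /=; first by rewrite big_ord0.
rewrite big_ord_recl /= add0n.
by rewrite sum_nat_const card_ord.
Qed.

Theorem corollary6p2 (n : nat) (hn : (2 <= n)%N) :
  forall eps : rat, 0 < eps ->
  exists N : nat, forall p : nat, prime p -> (N < p)%N -> Xratio p n < eps.
Proof.
move=> eps eps0.
have x0 : 0 <= (n.-1)%:R / eps by rewrite divr_ge0 // ltW.
exists (Num.Def.archi_bound ((n.-1)%:R / eps)) => p pp Np.
have bnd := archi_boundP x0.
have p1 : (0 < p.-1)%N by rewrite -subn1 subn_gt0 prime_gt1.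
have SLpos : (0 < #|SLset p n|)%N.
  by apply/card_gt0P; exists 1%:M; rewrite inE det1.
have SLr : 0 < (#|SLset p n|)%:R :> rat by rewrite ltr0n.
have p1r : 0 < (p.-1)%:R :> rat by rewrite ltr0n.
have key := Xcard n pp.
have keyr : (#|Xset p n|)%:R * (p.-1)%:R <= (n.-1)%:R * (#|SLset p n|)%:R :> rat.
  by rewrite -!natrM ler_nat.
have npr : (n.-1)%:R < eps * (p.-1)%:R :> rat.
  rewrite mulrC -ltr_pdivrMr //; apply: lt_le_trans bnd _.
  by rewrite ler_nat -ltnS prednK // (leq_trans _ Np) // ltnW.
rewrite /Xratio ltr_pdivrMr //.
rewrite -(ltr_pM2r p1r); apply: le_lt_trans keyr _.
rewrite [X in _ < X]mulrC mulrA ltr_pM2r //. by rewrite mulrC.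
Qed.
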